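(* Let $\hat H(w)=e^{-w}$ (discrete delay) and $\alpha,\beta\in\mathbb{R}$. If for some $\tilde\tau^*>0$ and $\omega>0$ the number $w=i\omega$ is a simple root of $\Phi(w)=0$ at $\tilde\tau=\tilde\tau^*$, then the root branch $w(\tilde\tau)$ through $i\omega$ satisfies $$\operatorname{Re}\left.\frac{dw}{d\tilde\tau}\right|_{\tilde\tau=\tilde\tau^*}=\frac{\omega^2}{\tilde\tau^*\big((1+\tilde\tau^* )^2+\omega^2\big)}>0.$$ In particular, every crossing of roots through the imaginary axis as $\tilde\tau$ increases is from left to right (so no stability switch back to stability can occur as $\tilde\tau$ increases).
   Context: For a delay-to-time-constant ratio $\tilde\tau>0$ and $\alpha,\beta\in\mathbb{R}$, the rescaled characteristic equation of the linearized coupled Wilson–Cowan system with kernel transform $\hat H$ is $$\Phi(w):=(w+\tilde\tau)^4-\alpha\,\tilde\tau^2(w+\tilde\tau)^2\hat H(w)^2+\beta\,\tilde\tau^4\hat H(w)^4=0.$$ For the Dirac (discrete) delay kernel $h(t)=\delta(t-\tau)$, $\hat H(w)=e^{-w}$. *)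

(* Defs.v *)
From Stdlib Require Import Reals.
From Coquelicot Require Import Coquelicot.
Open Scope R_scope.

Definition Cexp (z : C) : C :=
  (exp (Re z) * cos (Im z), exp (Re z) * sin (Im z)).

(* Kernel transform of the Dirac delay kernel h(t) = delta(t - tau): H^(w) = e^{-w}. *)
Definition Hdirac (w : C) : C := Cexp (Copp w).

Definition Phi (H : C -> C) (alpha beta t : R) (w : C) : C :=
  Cpow (w + RtoC t) 4
  - RtoC alpha * RtoC (t ^ 2) * Cpow (w + RtoC t) 2 * Cpow (H w) 2
  + RtoC beta * RtoC (t ^ 4) * Cpow (H w) 4.

Definition simple_root (f : C -> C) (w0 : C) : Prop :=
  f w0 = 0 /\ exists d : C, is_derive (K := C_AbsRing) f w0 d /\ d <> 0.

(* Main.v *)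
Require Import Defs.
From Stdlib Require Import Reals Lra Classical.
From Coquelicot Require Import Coquelicot.
Open Scope R_scope.

Lemma dfst (w : R -> C) x dw : is_derive w x dw -> is_derive (fun t => fst (w t)) x (fst dw).
Proof.
  intros H. unfold is_derive in *.
  eapply filterdiff_ext_lin.
  - apply (filterdiff_comp' w (fun z : C_R_NormedModule => fst z) x _ (fun z : C_R_NormedModule => fst z) H).
    apply filterdiff_linear. apply (@is_linear_fst R_AbsRing R_NormedModule R_NormedModule).
  - intros y. simpl. reflexivity.
Qed.

Lemma dsnd (w : R -> C) x dw : is_derive w x dw -> is_derive (fun t => snd (w t)) x (snd dw).
Proof.
  intros H. unfold is_derive in *.
  eapply filterdiff_ext_lin.
  - apply (filterdiff_comp' w (fun z : C_R_NormedModule => snd z) x _ (fun z : C_R_NormedModule => snd z) H).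
    apply filterdiff_linear. apply (@is_linear_snd R_AbsRing R_NormedModule R_NormedModule).
  - intros y. simpl. reflexivity.
Qed.

Lemma dpair (f : R -> C) x a b : is_derive (fun t => fst (f t)) x a -> is_derive (fun t => snd (f t)) x b ->
  is_derive f x (a, b).
Proof.
  intros Ha Hb. unfold is_derive in *.
  eapply filterdiff_ext_lin.
  - eapply filterdiff_ext.
    2: apply (filterdiff_comp'_2 (fun t => fst (f t)) (fun t => snd (f t)) (fun u v => (u, v) : C_R_NormedModule) x _ _ (fun u v => (u,v)) Ha Hb).
    + intros y. simpl. destruct (f y); reflexivity.
    + apply filterdiff_linear. split.
      * intros [] []. reflexivity.
      * intros k []. reflexivity.
      * exists 1. split. lra. intros []. rewrite Rmult_1_l. apply Rle_refl.
  - intros y. reflexivity.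
Qed.

Lemma is_derive_eqv (f : R -> R) x l l' : is_derive f x l -> l = l' -> is_derive f x l'.
Proof. intros H ->; exact H. Qed.


Lemma rmult (f g : R -> R) x df dg : is_derive f x df -> is_derive g x dg ->
  is_derive (fun t => f t * g t) x (df * g x + f x * dg).
Proof. rewrite !is_derive_Reals. intros. apply (derivable_pt_lim_mult f g); auto. Qed.
Lemma rminus (f g : R -> R) x df dg : is_derive f x df -> is_derive g x dg ->
  is_derive (fun t => f t - g t) x (df - dg).
Proof. rewrite !is_derive_Reals. intros. apply (derivable_pt_lim_minus f g); auto. Qed.
Lemma rplus (f g : R -> R) x df dg : is_derive f x df -> is_derive g x dg ->
  is_derive (fun t => f t + g t) x (df + dg).
Proof. rewrite !is_derive_Reals. intros. apply (derivable_pt_lim_plus f g); auto. Qed.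

Lemma rconst (c : R) x : is_derive (fun _ : R => c) x 0.
Proof. rewrite is_derive_Reals. apply derivable_pt_lim_const. Qed.
Lemma ropp (f : R -> R) x df : is_derive f x df -> is_derive (fun t => - f t) x (- df).
Proof. rewrite !is_derive_Reals. intros. apply (derivable_pt_lim_opp f); auto. Qed.
Lemma rexp (f : R -> R) x df : is_derive f x df -> is_derive (fun t => exp (f t)) x (exp (f x) * df).
Proof. intros H. eapply is_derive_eqv. rewrite is_derive_Reals in *.
  apply (derivable_pt_lim_comp f exp); [exact H | apply derivable_pt_lim_exp]. reflexivity. Qed.
Lemma rcos (f : R -> R) x df : is_derive f x df -> is_derive (fun t => cos (f t)) x (- sin (f x) * df).
Proof. intros H. eapply is_derive_eqv. rewrite is_derive_Reals in *.
  apply (derivable_pt_lim_comp f cos); [exact H | apply derivable_pt_lim_cos]. reflexivity. Qed.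
Lemma rsin (f : R -> R) x df : is_derive f x df -> is_derive (fun t => sin (f t)) x (cos (f x) * df).
Proof. intros H. eapply is_derive_eqv. rewrite is_derive_Reals in *.
  apply (derivable_pt_lim_comp f sin); [exact H | apply derivable_pt_lim_sin]. reflexivity. Qed.

Lemma dmult (f g : R -> C) x df dg : is_derive f x df -> is_derive g x dg ->
  is_derive (fun t => (f t * g t)%C) x (df * g x + f x * dg)%C.
Proof.
  intros Hf Hg.
  pose proof (dfst _ _ _ Hf) as F1. pose proof (dsnd _ _ _ Hf) as F2.
  pose proof (dfst _ _ _ Hg) as G1. pose proof (dsnd _ _ _ Hg) as G2.
  destruct df as [df1 df2]; destruct dg as [dg1 dg2]. simpl in *.
  apply dpair; simpl.
  - eapply is_derive_eqv.
    + apply rminus; apply rmult; eauto.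
    + simpl. ring.
  - eapply is_derive_eqv.
    + apply rplus; apply rmult; eauto.
    + simpl. ring.
Qed.

Lemma dplus (f g : R -> C) x df dg : is_derive f x df -> is_derive g x dg ->
  is_derive (fun t => (f t + g t)%C) x (df + dg)%C.
Proof.
  intros Hf Hg.
  pose proof (dfst _ _ _ Hf) as F1. pose proof (dsnd _ _ _ Hf) as F2.
  pose proof (dfst _ _ _ Hg) as G1. pose proof (dsnd _ _ _ Hg) as G2.
  destruct df as [df1 df2]; destruct dg as [dg1 dg2]. simpl in *.
  apply dpair; simpl; apply rplus; auto.
Qed.

Lemma dminus (f g : R -> C) x df dg : is_derive f x df -> is_derive g x dg ->
  is_derive (fun t => (f t - g t)%C) x (df - dg)%C.
Proof.
  intros Hf Hg.
  pose proof (dfst _ _ _ Hf) as F1. pose proof (dsnd _ _ _ Hf) as F2.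
  pose proof (dfst _ _ _ Hg) as G1. pose proof (dsnd _ _ _ Hg) as G2.
  destruct df as [df1 df2]; destruct dg as [dg1 dg2]. simpl in *.
  apply dpair; simpl; apply rminus; auto.
Qed.

Lemma dconst (c : C) x : is_derive (fun _ : R => c) x (RtoC 0).
Proof. apply dpair; simpl; apply rconst. Qed.

Lemma dRtoC (r : R -> R) x dr : is_derive r x dr -> is_derive (fun t => RtoC (r t)) x (RtoC dr).
Proof. intros H. apply dpair; simpl; auto. apply rconst. Qed.

Lemma dHdirac_aux (w : R -> C) x dw : is_derive w x dw ->
  is_derive (fun t => Cexp (Copp (w t))) x (- Cexp (Copp (w x)) * dw)%C.
Proof.
  intros H. pose proof (dfst _ _ _ H) as A. pose proof (dsnd _ _ _ H) as B.
  destruct dw as [a b]. simpl in *. unfold Cexp; simpl.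
  apply dpair; simpl.
  - eapply is_derive_eqv. apply rmult. apply rexp. apply ropp, A.
    apply rcos. apply ropp, B. simpl. ring.
  - eapply is_derive_eqv. apply rmult. apply rexp. apply ropp, A.
    apply rsin. apply ropp, B. simpl. ring.
Qed.

Lemma rid x : is_derive (fun t : R => t) x 1.
Proof. rewrite is_derive_Reals. apply derivable_pt_lim_id. Qed.

Lemma dzero (f : R -> C) x l : locally x (fun t => f t = RtoC 0) -> is_derive f x l -> l = RtoC 0.
Proof.
  intros Hl Hd.
  pose proof (dfst _ _ _ Hd) as A. pose proof (dsnd _ _ _ Hd) as B.
  assert (A' : is_derive (fun _ : R => 0) x (fst l)).
  { eapply is_derive_ext_loc; [|exact A]. eapply filter_imp; [|exact Hl].
    intros t ->. reflexivity. }
  assert (B' : is_derive (fun _ : R => 0) x (snd l)).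
  { eapply is_derive_ext_loc; [|exact B]. eapply filter_imp; [|exact Hl].
    intros t ->. reflexivity. }
  apply is_derive_unique in A'. apply is_derive_unique in B'.
  pose proof (is_derive_unique _ _ _ (rconst 0 x)) as C0.
  destruct l as [l1 l2]; simpl in *. apply injective_projections; simpl; congruence.
Qed.

Lemma Cint (a b : C) : (a * b)%C = RtoC 0 -> a = RtoC 0 \/ b = RtoC 0.
Proof.
  intros H. destruct (classic (a = RtoC 0)) as [Ha|Ha]; [left; exact Ha|].
  destruct (classic (b = RtoC 0)) as [Hb|Hb]; [right; exact Hb|].
  exfalso. exact (Cmult_neq_0 a b Ha Hb H).
Qed.

Lemma Hdirac_nz (z : C) : Hdirac z <> RtoC 0.
Proof.
  unfold Hdirac, Cexp. intros H. injection H as H1 H2.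
  pose proof (exp_pos (Re (- z)%C)) as P.
  pose proof (sin2_cos2 (Im (- z)%C)) as S.
  apply Rmult_integral in H1; apply Rmult_integral in H2.
  pose proof (exp_pos (- fst z)) as P2. pose proof (sin2_cos2 (- snd z)) as S2. destruct H1 as [H1|H1]; [lra|]. destruct H2 as [H2|H2]; [lra|].
  rewrite H1, H2 in S2. unfold Rsqr in S2. lra.
Qed.

Lemma dH (w : R -> C) x dw : is_derive w x dw ->
  is_derive (fun t => Hdirac (w t)) x (- Hdirac (w x) * dw)%C.
Proof. apply dHdirac_aux. Qed.

Lemma is_derive_eqC (f : R -> C) x (l l' : C) : is_derive f x l -> l = l' -> is_derive f x l'.
Proof. intros H ->; exact H. Qed.

Theorem mainTheorem6 (alpha beta tau0 omega : R) :
  0 < tau0 -> 0 < omega ->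
  simple_root (Phi Hdirac alpha beta tau0) (0, omega) ->
  forall (w : R -> C) (dw : C),
    w tau0 = (0, omega) ->
    locally tau0 (fun t => Phi Hdirac alpha beta t (w t) = 0) ->
    is_derive w tau0 dw ->
    Re dw = omega ^ 2 / (tau0 * ((1 + tau0) ^ 2 + omega ^ 2)) /\
    0 < omega ^ 2 / (tau0 * ((1 + tau0) ^ 2 + omega ^ 2)).
Proof.
  intros Ht Hom [Hphi0 _] w dw Hw0 Hloc Hdw.
  set (X := fun t => ((w t + RtoC t) * (w t + RtoC t))%C).
  set (E := fun t => Hdirac (w t)).
  set (Y := fun t => (RtoC (t*t) * (E t * E t))%C).
  assert (HPhi : forall t, Phi Hdirac alpha beta t (w t) =
     (X t * X t - RtoC alpha * X t * Y t + RtoC beta * Y t * Y t)%C).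
  { intros t. unfold Phi, X, Y, E. rewrite !RtoC_pow, !RtoC_mult. ring. }
  set (X0 := X tau0). set (Y0 := Y tau0).
  set (D := fun t => (Y t * X0 - Y0 * X t)%C).
  set (N := fun t => (RtoC beta * (Y t * X0 + Y0 * X t) - RtoC alpha * X t * X0)%C).
  rewrite <- Hw0 in Hphi0.
  assert (Hkey : forall t, Phi Hdirac alpha beta t (w t) = RtoC 0 -> (D t * N t)%C = RtoC 0).
  { intros t Hp. rewrite HPhi in Hp, Hphi0.
    transitivity (X0 * X0 * (X t * X t - RtoC alpha * X t * Y t + RtoC beta * Y t * Y t)
       - X t * X t * (X tau0 * X tau0 - RtoC alpha * X tau0 * Y tau0 + RtoC beta * Y tau0 * Y tau0))%C.
    - unfold D, N, X0, Y0. ring.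
    - rewrite Hp, Hphi0. ring. }
  pose proof (dplus _ _ _ _ _ Hdw (dRtoC _ _ _ (rid tau0))) as Hs.
  pose proof (dmult _ _ _ _ _ Hs Hs) as HX.
  pose proof (dH _ _ _ Hdw) as HE.
  pose proof (dmult _ _ _ _ _ (dRtoC _ _ _ (rmult _ _ _ _ _ (rid tau0) (rid tau0))) (dmult _ _ _ _ _ HE HE)) as HY.
  pose proof (dminus _ _ _ _ _ (dmult _ _ _ _ _ HY (dconst X0 tau0)) (dmult _ _ _ _ _ (dconst Y0 tau0) HX)) as HD.
  pose proof (dminus _ _ _ _ _ (dmult _ _ _ _ _ (dconst (RtoC beta) tau0) (dplus _ _ _ _ _ (dmult _ _ _ _ _ HY (dconst X0 tau0)) (dmult _ _ _ _ _ (dconst Y0 tau0) HX)))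
     (dmult _ _ _ _ _ (dmult _ _ _ _ _ (dconst (RtoC alpha) tau0) HX) (dconst X0 tau0))) as HN.
  pose proof (dmult _ _ _ _ _ HD HN) as HDN.
  set (w0 := w tau0) in *. set (E0 := E tau0).
  set (dDv := (RtoC 2 * RtoC tau0 * (E0 * E0) * (w0 + RtoC tau0) *
              (w0 - RtoC tau0 * dw * (w0 + RtoC tau0 + RtoC 1)))%C).
  assert (L : locally tau0 (fun t => (D t * N t)%C = RtoC 0)).
  { eapply filter_imp; [|exact Hloc]. intros t Hp. apply Hkey. exact Hp. }
  pose proof (dzero (fun t => (D t * N t)%C) tau0 _ L HDN) as Z.
  assert (HD' : is_derive (fun t => D t) tau0 dDv).
  { eapply is_derive_eqC; [exact HD|]. cbv beta. unfold dDv, E0, w0, X0, Y0, X, Y, E.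
    rewrite ?RtoC_plus, ?RtoC_mult. ring. }
  assert (Z' : (dDv * N tau0)%C = RtoC 0).
  { rewrite <- Z. cbv beta. unfold dDv, D, N, E0, w0, X0, Y0, X, Y, E.
    rewrite ?RtoC_plus, ?RtoC_mult. ring. }
  clear Z HDN HN HD HY HE HX Hs.
  assert (Hwt : (w0 + RtoC tau0)%C <> RtoC 0).
  { rewrite Hw0. intros H. injection H. lra. }
  assert (HX0 : X0 <> RtoC 0).
  { unfold X0, X. apply Cmult_neq_0; exact Hwt. }
  assert (HdD : dDv = RtoC 0).
  { destruct (classic (N tau0 = RtoC 0)) as [HN0|HN0].
    - assert (Hab : (RtoC 2 * RtoC beta * Y0 - RtoC alpha * X0)%C = RtoC 0).
      { assert (E1 : N tau0 = (X0 * (RtoC 2 * RtoC beta * Y0 - RtoC alpha * X0))%C).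
        { unfold N, X0, Y0. ring. }
        rewrite E1 in HN0. destruct (Cint _ _ HN0) as [H|H]; [contradiction|exact H]. }
      assert (Hpt : forall tt, Phi Hdirac alpha beta tt (w tt) = RtoC 0 -> D tt = RtoC 0).
      { intros tt Hp. pose proof (Hkey tt Hp) as K.
        assert (E3 : (RtoC beta * X0 * (D tt * D tt))%C = RtoC 0).
        { transitivity (X0 * (D tt * N tt) - D tt * X tt * X0 * (RtoC 2 * RtoC beta * Y0 - RtoC alpha * X0))%C.
          - unfold D, N. ring.
          - rewrite K, Hab. ring. }
        destruct (Cint _ _ E3) as [H|H].
        - destruct (Cint _ _ H) as [Hb|Hb]; [|contradiction].
          exfalso. rewrite Hb in Hab.
          assert (Ha : (RtoC alpha * X0)%C = RtoC 0).
          { transitivity (- (RtoC 2 * RtoC 0 * Y0 - RtoC alpha * X0))%C; [ring|].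
            rewrite Hab. ring. }
          destruct (Cint _ _ Ha) as [Ha'|Ha']; [|contradiction].
          rewrite HPhi in Hphi0. fold X0 Y0 in Hphi0. rewrite Ha', Hb in Hphi0.
          apply HX0. assert (E4 : (X0 * X0)%C = RtoC 0).
          { rewrite <- Hphi0. unfold X0, Y0. ring. }
          destruct (Cint _ _ E4); assumption.
        - destruct (Cint _ _ H); assumption. }
      assert (L2 : locally tau0 (fun t => D t = RtoC 0)).
      { eapply filter_imp; [exact Hpt|exact Hloc]. }
      apply (dzero _ _ _ L2 HD').
    - destruct (Cint _ _ Z') as [H|H]; [exact H|contradiction]. }
  assert (Hlast : (w0 - RtoC tau0 * dw * (w0 + RtoC tau0 + RtoC 1))%C = RtoC 0).
  { unfold dDv in HdD. destruct (Cint _ _ HdD) as [H|H]; [|exact H]. exfalso.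
    revert H. apply Cmult_neq_0; [|exact Hwt].
    apply Cmult_neq_0; [apply Cmult_neq_0|].
    - intros H. injection H. lra.
    - intros H. injection H. lra.
    - unfold E0, E. apply Cmult_neq_0; apply Hdirac_nz. }
  rewrite Hw0 in Hlast. destruct dw as [x y].
  pose proof (f_equal fst Hlast) as F1. pose proof (f_equal snd Hlast) as F2.
  simpl in F1, F2. change (Re (x, y)) with x.
  assert (A1 : tau0 * x * (1 + tau0) = tau0 * y * omega) by lra.
  assert (A2 : omega = tau0 * x * omega + tau0 * y * (1 + tau0)) by lra.
  assert (Hden : 0 < tau0 * ((1 + tau0) ^ 2 + omega ^ 2)).
  { apply Rmult_lt_0_compat; [lra|]. nra. }
  assert (Hx : x * (tau0 * ((1 + tau0) ^ 2 + omega ^ 2)) = omega ^ 2).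
  { transitivity ((1 + tau0) * (tau0 * x * (1 + tau0)) + omega * (tau0 * x * omega)); [ring|].
    rewrite A1. transitivity (omega * (tau0 * x * omega + tau0 * y * (1 + tau0))); [ring|].
    rewrite <- A2. ring. }
  split.
  - apply Rmult_eq_reg_r with (tau0 * ((1 + tau0) ^ 2 + omega ^ 2)); [|apply Rgt_not_eq, Hden]. rewrite Hx. field. split; apply Rgt_not_eq; nra.
  - apply Rdiv_lt_0_compat; [nra|exact Hden].
Qed.
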